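(* Let $\mathbb{F}$ be an algebraically closed field and $V$ a $2m$-dimensional $\mathbb{F}$-vector space with a split nondegenerate quadratic form, with isometry group $O(V)$. Let $A\le O(V)$ be a finite abelian group of odd order not divisible by the characteristic of $\mathbb{F}$. (i) If some nontrivial linear character of $A$ occurs in $V$ with multiplicity at least $2$, then the centralizer $C_{O(V)}(A)$ contains a root group of $O(V)$. (ii) If the trivial character of $A$ occurs in $V$ with multiplicity at least $4$, then $C_{O(V)}(A)$ contains a root group of $O(V)$.
   Context: Let $B$ be the symmetric bilinear form associated with the quadratic form. A root group of $O(V)$ is a subgroup of the form $\{x\mapsto x+t(B(x,w)u-B(x,u)w): t\in\mathbb{F}\}$, where $u,w$ span a $2$-dimensional totally singular subspace of $V$. The multiplicity of a linear character $\lambda$ of $A$ in $V$ is the dimension of $\{v\in V: av=\lambda(a)v \text{ for all } a\in A\}$. *)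

(* Defs.v *)
From HB Require Import structures.
From mathcomp Require Import all_boot all_order all_algebra all_fingroup.
From mathcomp Require Import mxrepresentation.
Set Implicit Arguments. Unset Strict Implicit. Unset Printing Implicit Defensive.
Import GRing.Theory.
Local Open Scope ring_scope.

(* V = 'rV[F]_n (row vectors); a quadratic form is Q(x) = x M x^T for a
   matrix M (every quadratic form on F^n has this shape). Linear maps act on
   the right of row vectors: x |-> x *m g. *)

Definition qf (F : fieldType) (n : nat) (M : 'M[F]_n) (x : 'rV[F]_n) : F :=
  (x *m M *m x^T) 0 0.

Definition bf (F : fieldType) (n : nat) (M : 'M[F]_n) (x y : 'rV[F]_n) : F :=
  qf M (x + y) - qf M x - qf M y.

Definition nondeg_qf (F : fieldType) (n : nat) (M : 'M[F]_n) : Prop :=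
  forall x : 'rV[F]_n, (forall y, bf M x y = 0) -> x = 0.

(* split: there is a totally singular subspace of dimension m (Witt index m)
   in the 2m-dimensional space *)
Definition split_qf (F : fieldType) (m : nat) (M : 'M[F]_(2 * m)) : Prop :=
  exists U : 'M[F]_(m, 2 * m),
    row_free U /\ forall x : 'rV[F]_(2 * m), (x <= U)%MS -> qf M x = 0.

Definition in_O (F : fieldType) (n : nat) (M : 'M[F]_n) (g : 'M[F]_n) : Prop :=
  g \in unitmx /\ forall x : 'rV[F]_n, qf M (x *m g) = qf M x.

Definition linear_char (F : fieldType) (gT : finGroupType) (A : {set gT})
    (lam : gT -> F) : Prop :=
  (forall a, a \in A -> lam a != 0) /\ {in A &, {morph lam : x y / (x * y)%g >-> x * y}}.

Definition multiplicity (F : fieldType) (gT : finGroupType) (n : nat)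
    (rho : gT -> 'M[F]_n) (A : {set gT}) (lam : gT -> F) : nat :=
  \rank (\bigcap_(a in A) kermx (rho a - (lam a)%:M))%MS.

Definition tot_sing_pair (F : fieldType) (n : nat) (M : 'M[F]_n)
    (u w : 'rV[F]_n) : Prop :=
  \rank (col_mx u w) = 2%N /\
  forall a b : F, qf M (a *: u + b *: w) = 0.

Definition root_map (F : fieldType) (n : nat) (M : 'M[F]_n)
    (u w : 'rV[F]_n) (t : F) (x : 'rV[F]_n) : 'rV[F]_n :=
  x + t *: (bf M x w *: u - bf M x u *: w).

Definition centralizer_has_root_group (F : fieldType) (gT : finGroupType)
    (n : nat) (M : 'M[F]_n) (rho : gT -> 'M[F]_n) (A : {set gT}) : Prop :=
  exists u w : 'rV[F]_n, tot_sing_pair M u w /\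
    forall t : F, exists g : 'M[F]_n,
      [/\ in_O M g,
          (forall a, a \in A -> g *m rho a = rho a *m g) &
          (forall x, x *m g = root_map M u w t x)].

(* Main.v *)
Require Import Defs.
From HB Require Import structures.
From mathcomp Require Import all_boot all_order all_algebra all_fingroup.
From mathcomp Require Import mxrepresentation.
From mathcomp Require Import ring zify.
From mathcomp Require Import cyclic.
From Stdlib Require Import Classical.
Import GRing.Theory.
Local Open Scope ring_scope.

Section Basic.
Variables (F : fieldType) (n : nat) (M : 'M[F]_n).
Local Notation S := (M + M^T).

Lemma addE11 (A B : 'M[F]_1) : (A + B) 0 0 = A 0 0 + B 0 0.
Proof. by rewrite mxE. Qed.

Lemma bfE x y : bf M x y = (x *m S *m y^T) 0 0.
Proof.
rewrite /bf /qf linearD /= !mulmxDl !mulmxDr !addE11.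
have -> : (y *m M *m x^T) 0 0 = (x *m M^T *m y^T) 0 0.
  have -> : (y *m M *m x^T) 0 0 = ((y *m M *m x^T)^T) 0 0 by rewrite [RHS]mxE.
  by rewrite !trmx_mul trmxK mulmxA.
by rewrite mulmxDl addE11; ring.
Qed.

Lemma bf_sym x y : bf M x y = bf M y x.
Proof. rewrite /bf [x + y]addrC; ring. Qed.

Lemma bfDr x y z : bf M x (y + z) = bf M x y + bf M x z.
Proof. by rewrite !bfE [(y + z)^T]linearD /= mulmxDr mxE. Qed.

Lemma bfZr x c y : bf M x (c *: y) = c * bf M x y.
Proof. by rewrite !bfE [(c *: y)^T]linearZ /= -scalemxAr mxE. Qed.

Lemma bfDl x y z : bf M (y + z) x = bf M y x + bf M z x.
Proof. by rewrite bf_sym bfDr !(bf_sym x). Qed.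

Lemma bfZl x c y : bf M (c *: y) x = c * bf M y x.
Proof. by rewrite bf_sym bfZr bf_sym. Qed.

Lemma bfNr x y : bf M x (- y) = - bf M x y.
Proof. by rewrite -scaleN1r bfZr mulN1r. Qed.

Lemma bf0r x : bf M x 0 = 0.
Proof. by rewrite -(scale0r 0) bfZr mul0r. Qed.

Lemma qfZ c x : qf M (c *: x) = c ^+ 2 * qf M x.
Proof. by rewrite /qf linearZ /= -scalemxAl -scalemxAl -scalemxAr !mxE expr2 mulrA. Qed.

Lemma qfD x y : qf M (x + y) = qf M x + qf M y + bf M x y.
Proof. by rewrite /bf; ring. Qed.

Lemma bf_diag x : bf M x x = 2%:R * qf M x.
Proof. by rewrite /bf -mulr2n -scaler_nat qfZ; ring. Qed.

Lemma inO_bf g x y : in_O M g -> bf M (x *m g) (y *m g) = bf M x y.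
Proof. by case=> _ H; rewrite /bf -mulmxDl !H. Qed.

Lemma mx_ext (A B : 'M[F]_n) : (forall x : 'rV_n, x *m A = x *m B) -> A = B.
Proof. by move=> H; apply/row_matrixP => i; rewrite -(mul1mx A) -(mul1mx B) !row_mul H. Qed.

Lemma mx11_mul (c : 'M[F]_1) (u : 'rV[F]_n) : c *m u = c 0 0 *: u.
Proof. by rewrite {1}[c]mx11_scalar mul_scalar_mx. Qed.


Definition Nmx (u w : 'rV[F]_n) := S *m w^T *m u - S *m u^T *m w.

Lemma NmxE u w x : x *m Nmx u w = bf M x w *: u - bf M x u *: w.
Proof. by rewrite /Nmx mulmxBr !mulmxA !mx11_mul !bfE. Qed.

Lemma core (gT : finGroupType) (A : {set gT}) (rho : gT -> 'M[F]_n) u w :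
  tot_sing_pair M u w -> (forall a, a \in A -> in_O M (rho a)) ->
  (forall a, a \in A -> exists al, al != 0 /\ u *m rho a = al *: u /\
                                   w *m rho a = al^-1 *: w) ->
  centralizer_has_root_group M rho A.
Proof.
move=> [rk ts] hO heig; exists u, w; split => // t.
have qu : qf M u = 0 by have := ts 1 0; rewrite scale1r scale0r addr0.
have qw : qf M w = 0 by have := ts 0 1; rewrite scale1r scale0r add0r.
have buw : bf M u w = 0.
  by have := ts 1 1; rewrite !scale1r qfD qu qw !add0r.
have buu : bf M u u = 0 by rewrite bf_diag qu mulr0.
have bww : bf M w w = 0 by rewrite bf_diag qw mulr0.
have bwu : bf M w u = 0 by rewrite bf_sym.
have NN : Nmx u w *m Nmx u w = 0.
  apply: mx_ext => x; rewrite mulmxA [x *m _]NmxE mulmx0 mulmxBl -!scalemxAl !NmxE.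
  by rewrite buu buw bww bwu !scale0r subrr !scaler0 subrr.
exists (1%:M + t *: Nmx u w); split.
- split.
    have h : (1%:M + t *: Nmx u w) *m (1%:M - t *: Nmx u w) = 1%:M.
      rewrite mulmxDl mulmxBr mulmxBr !mul1mx mulmx1 -scalemxAl -scalemxAr NN.
      by rewrite !scaler0 subr0 addrNK.
    by case: (mulmx1_unit h).
  move=> x; rewrite mulmxDr mulmx1 -scalemxAr NmxE qfD.
  rewrite scalerBr !scalerA -scaleNr ts addr0 bfDr !bfZr.
  ring.
- move=> a aA; rewrite mulmxDl mulmxDr mul1mx mulmx1; congr (_ + _).
  rewrite -scalemxAl -scalemxAr; congr (_ *: _).
  have [al [al0 [hu hw]]] := heig a aA.
  apply: mx_ext => x; rewrite !mulmxA NmxE mulmxBl -!scalemxAl hu hw NmxE.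
  have e1 : bf M (x *m rho a) w = al * bf M x w.
    have := inO_bf (rho a) x (al *: w) (hO a aA).
    by rewrite -scalemxAl hw scalerA mulfV // scale1r bfZr => ->.
  have e2 : bf M (x *m rho a) u = al^-1 * bf M x u.
    have := inO_bf (rho a) x (al^-1 *: u) (hO a aA).
    by rewrite -scalemxAl hu scalerA mulVf // scale1r bfZr => ->.
  by rewrite e1 e2 !scalerA mulrC [_ / al]mulrC.
- by move=> x; rewrite mulmxDr mulmx1 -scalemxAr NmxE.
Qed.


Lemma mx11_eq0 (B : 'M[F]_1) : (B == 0) = (B 0 0 == 0).
Proof.
apply/eqP/eqP => [->|h]; first by rewrite mxE.
by rewrite [B]mx11_scalar h; apply/matrixP => i k; rewrite !ord1 !mxE.
Qed.

Lemma sub_kerC (C : 'cV[F]_n) (x : 'rV[F]_n) :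
  (x <= kermx C)%MS = ((x *m C) 0 0 == 0).
Proof. by rewrite sub_kermx mx11_eq0. Qed.

Lemma phiD (C : 'cV[F]_n) (x y : 'rV[F]_n) : ((x + y) *m C) 0 0 = (x *m C) 0 0 + (y *m C) 0 0.
Proof. by rewrite mulmxDl mxE. Qed.

Lemma phiZ (C : 'cV[F]_n) a (x : 'rV[F]_n) : ((a *: x) *m C) 0 0 = a * (x *m C) 0 0.
Proof. by rewrite -scalemxAl mxE. Qed.

Lemma phi_exists (u : 'rV[F]_n) : u != 0 -> exists C : 'cV[F]_n, (u *m C) 0 0 != 0.
Proof.
case/matrix0Pn => i [j hij]; exists (delta_mx j 0).
by move: hij; rewrite (ord1 i) -colE mxE.
Qed.

Lemma rank_cap_ker p (K : 'M[F]_(p, n)) (C : 'cV[F]_n) :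
  (\rank K <= (\rank (K :&: kermx C)).+1)%N.
Proof.
have h := mxrank_sum_cap K (kermx C).
have h1 := rank_leq_col (K + kermx C)%MS.
have h2 := rank_leq_col C.
rewrite mxrank_ker in h.
lia.
Qed.

Lemma rank2 (u w : 'rV[F]_n) :
  (forall a b, a *: u + b *: w = 0 -> a = 0 /\ b = 0) -> \rank (col_mx u w) = 2%N.
Proof.
move=> hi; have rf : row_free (col_mx u w).
  rewrite -kermx_eq0; apply/rowV0P => v /sub_kermxP.
  rewrite -[v]hsubmxK mul_row_col !mx11_mul => /hi [ha hb].
  rewrite [lsubmx v]mx11_scalar [rsubmx v]mx11_scalar ha hb.
  by apply/matrixP => i k; rewrite !mxE; case: splitP => ? _; rewrite !mxE mul0rn.
by move/eqP: rf.
Qed.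

Lemma indep_coord (C : 'cV[F]_n) (u w : 'rV[F]_n) :
  (u *m C) 0 0 != 0 -> (w *m C) 0 0 = 0 -> w != 0 ->
  forall a b, a *: u + b *: w = 0 -> a = 0 /\ b = 0.
Proof.
move=> hu hw w0 a b e.
have := congr1 (fun z => (z *m C) 0 0) e; rewrite /= phiD !phiZ hw mulr0 addr0.
have z0 : (0 : 'M[F]_1) 0 0 = 0 by rewrite mxE.
rewrite mul0mx z0 => /eqP; rewrite mulf_eq0 (negbTE hu) orbF => /eqP a0.
split=> //; move: e; rewrite a0 scale0r add0r => /eqP.
by rewrite scalemx_eq0 (negbTE w0) orbF => /eqP.
Qed.

Lemma two_vecs p (K : 'M[F]_(p, n)) : (2 <= \rank K)%N ->
  exists (u1 u2 : 'rV[F]_n) (C : 'cV[F]_n), [/\ (u1 <= K)%MS, (u2 <= K)%MS,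
     (u1 *m C) 0 0 != 0, (u2 *m C) 0 0 = 0 & u2 != 0].
Proof.
move=> r2.
have [u1 u1K u10] : exists2 v : 'rV_n, (v <= K)%MS & v != 0.
  by apply/rowV0Pn; rewrite -mxrank_eq0 -lt0n; apply: leq_trans r2.
have [C hC] := phi_exists _ u10.
have [u2 u2K u20] : exists2 v : 'rV_n, (v <= K :&: kermx C)%MS & v != 0.
  apply/rowV0Pn; rewrite -mxrank_eq0 -lt0n.
  by have := rank_cap_ker _ K C; lia.
exists u1, u2, C; split => //.
- by apply: submx_trans u2K (capmxSl _ _).
- by apply/eqP; rewrite -sub_kerC; apply: submx_trans u2K (capmxSr _ _).
Qed.

End Basic.

Lemma sing_vec (F : closedFieldType) (n : nat) (M : 'M[F]_n) p (K : 'M[F]_(p, n)) :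
  (2 <= \rank K)%N -> exists2 v : 'rV[F]_n, (v <= K)%MS & (v != 0) && (qf M v == 0).
Proof.
move=> /two_vecs [u1 [u2 [C [u1K u2K h1 h2 u20]]]].
have u10 : u1 != 0 by apply: contraNneq h1 => ->; rewrite mul0mx mxE.
have [q0|q0] := eqVneq (qf M u1) 0; first by exists u1 => //; rewrite u10 q0 eqxx.
pose P := fun i : nat => if i == 0%N then - qf M u2 / qf M u1 else - bf M u1 u2 / qf M u1.
have [x hx] := @solve_monicpoly F 2 P isT.
rewrite !big_ord_recl big_ord0 /= addr0 expr0 expr1 mulr1 in hx.
exists (x *: u1 + u2).
  by rewrite addmx_sub // scalemx_sub.
apply/andP; split.
  have [->|x0] := eqVneq x 0; first by rewrite scale0r add0r.
  apply: contraNneq (mulf_neq0 x0 h1) => e.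
  have := congr1 (fun z => (z *m C) 0 0) e; rewrite /= phiD phiZ h2 addr0 => ->.
  by rewrite mul0mx mxE.
rewrite qfD qfZ bfZl hx /P /=; apply/eqP; field; exact: q0.
Qed.

Section Parts.
Variables (F : closedFieldType) (n : nat) (M : 'M[F]_n).
Variables (gT : finGroupType) (A : {set gT}) (rho : gT -> 'M[F]_n).
Hypothesis hO : forall a, a \in A -> in_O M (rho a).
Local Notation S := (M + M^T).

Lemma part2 p (W : 'M[F]_(p, n)) :
  (4 <= \rank W)%N ->
  (forall v : 'rV[F]_n, (v <= W)%MS -> forall a, a \in A -> v *m rho a = v) ->
  centralizer_has_root_group M rho A.
Proof.
move=> r4 hfix.
have [u uW /andP [u0 /eqP qu]] := sing_vec _ _ M _ W (leq_trans (isT : (2 <= 4)%N) r4).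
have [C hC] := phi_exists _ _ _ u0.
pose K := ((W :&: kermx (S *m u^T)) :&: kermx C)%MS.
have rK : (2 <= \rank K)%N.
  have := rank_cap_ker _ _ _ (W :&: kermx (S *m u^T))%MS C.
  have := rank_cap_ker _ _ _ W (S *m u^T); rewrite /K; lia.
have [w wK /andP [w0 /eqP qw]] := sing_vec _ _ M _ _ rK.
have wW : (w <= W)%MS.
  by apply: submx_trans wK _; apply: submx_trans (capmxSl _ _) (capmxSl _ _).
have buw : bf M u w = 0.
  have : (w <= kermx (S *m u^T))%MS.
    by apply: submx_trans wK _; rewrite /K (submx_trans (capmxSl _ _)) ?capmxSr.
  by rewrite sub_kerC mulmxA -bfE bf_sym => /eqP.
have hwC : (w *m C) 0 0 = 0.
  by apply/eqP; rewrite -sub_kerC; apply: submx_trans wK (capmxSr _ _).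
apply: (@core F n M gT A rho u w) => //.
  split; first by apply: rank2; exact: (indep_coord _ _ _ _ _ hC hwC w0).
  by move=> a b; rewrite qfD !qfZ bfZl bfZr buw qu qw !mulr0 addr0 add0r.
move=> a aA; exists 1; split; first exact: oner_neq0.
by rewrite invr1 !scale1r !hfix.
Qed.

End Parts.

Section Part1.
Variables (F : closedFieldType) (n : nat) (M : 'M[F]_n).
Variables (gT : finGroupType) (A : {group gT}) (rho : gT -> 'M[F]_n).
Hypothesis hO : forall a, a \in A -> in_O M (rho a).

Lemma bf_sumr (x : 'rV[F]_n) (I : finType) (P : pred I) (f : I -> 'rV[F]_n) :
  bf M x (\sum_(i | P i) f i) = \sum_(i | P i) bf M x (f i).
Proof. exact: (big_morph (bf M x) (bfDr _ _ M x) (bf0r _ _ M x)). Qed.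

Lemma part1 p (W : 'M[F]_(p, n)) (lam : gT -> F) a0 :
  nondeg_qf M -> (#|A|%:R != 0 :> F) ->
  {in A &, forall a b, rho (a * b)%g = rho a *m rho b} ->
  {in A &, {morph lam : x y / (x * y)%g >-> x * y}} ->
  (forall a, a \in A -> lam a * lam a^-1%g = 1) ->
  a0 \in A -> lam a0 ^+ 2 != 1 ->
  (2 <= \rank W)%N ->
  (forall v : 'rV[F]_n, (v <= W)%MS -> forall a, a \in A -> v *m rho a = lam a *: v) ->
  centralizer_has_root_group M rho A.
Proof.
move=> nd cA rM lM linv a0A l2 r2 eig.
have [u1 [u2 [C [u1K u2K h1 h2 u20]]]] := two_vecs _ _ _ _ r2.
have u10 : u1 != 0 by apply: contraNneq h1 => ->; rewrite mul0mx mxE.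
have [y hy] : exists y, bf M u1 y != 0.
  apply: NNPP => hn; move/eqP: u10; apply; apply: nd => z.
  apply: NNPP => hz; apply: hn; exists z; by apply/eqP.
pose w1 := \sum_(a in A) lam a *: (y *m rho a).
have ew : forall b, b \in A -> w1 *m rho b = lam b^-1%g *: w1.
  move=> b bA; rewrite /w1 mulmx_suml scaler_sumr.
  rewrite [RHS](reindex_inj (mulIg b)) /=.
  apply: eq_big => [a|a aA]; first by rewrite groupMr.
  rewrite -scalemxAl -mulmxA -rM // ?groupMr // scalerA lM ?groupMr //.
  by rewrite mulrCA [lam b^-1%g * _]mulrC linv // mulr1.
have bu1w1 : bf M u1 w1 = #|A|%:R * bf M u1 y.
  rewrite /w1 bf_sumr (eq_bigr (fun _ => bf M u1 y)) => [|a aA].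
    by rewrite sumr_const mulr_natl.
  rewrite bfZr -bfZl -(eig _ u1K a aA); exact: inO_bf (hO a aA).
have d0 : bf M u1 w1 != 0 by rewrite bu1w1 mulf_neq0.
have w10 : w1 != 0 by apply: contraNneq d0 => ->; rewrite bf0r.
have [u [uW u0 buw]] : exists u, [/\ (u <= W)%MS, u != 0 & bf M u w1 = 0].
  have [c0|c0] := eqVneq (bf M u2 w1) 0; first by exists u2.
  exists (bf M u2 w1 *: u1 + (- bf M u1 w1) *: u2); split.
  - by rewrite addmx_sub // scalemx_sub.
  - apply: contraNneq (mulf_neq0 c0 h1) => e.
    have := congr1 (fun z => (z *m C) 0 0) e.
    by rewrite /= phiD !phiZ h2 mulr0 addr0 => ->; rewrite mul0mx mxE.
  - by rewrite bfDl !bfZl; ring.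
have lam0 : forall a, a \in A -> lam a != 0.
  by move=> a aA; apply/eqP => e; have := linv a aA; rewrite e mul0r => /eqP; rewrite eq_sym oner_eq0.
have linv' : forall a, a \in A -> lam a^-1%g = (lam a)^-1.
  move=> a aA; rewrite -[lam a^-1%g]mul1r -(mulVf (lam0 a aA)) -mulrA linv //.
  by rewrite mulr1.
have m2 : lam a0^-1%g ^+ 2 != 1.
  apply: contra l2 => /eqP e; apply/eqP.
  by rewrite -[lam a0 ^+ 2]mulr1 -e -exprMn linv // expr1n.
have lnm : lam a0 != lam a0^-1%g.
  apply: contra l2 => /eqP e; apply/eqP; by rewrite expr2 {2}e linv.
have sq : forall (c : F) (v : 'rV[F]_n), v *m rho a0 = c *: v -> c ^+ 2 != 1 -> qf M v = 0.
  move=> c v hv hc; have := (hO a0 a0A).2 v; rewrite hv qfZ => /eqP.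
  rewrite -subr_eq0 -{2}[qf M v]mul1r -mulrBl mulf_eq0 subr_eq0 (negbTE hc) /=.
  by move/eqP.
have qu : qf M u = 0 by apply: sq (eig _ uW a0 a0A) l2.
have qw : qf M w1 = 0 by apply: sq (ew a0 a0A) m2.
apply: (@core F n M gT A rho u w1) => //.
  split; last by move=> a b; rewrite qfD !qfZ bfZl bfZr buw qu qw !mulr0 addr0 add0r.
  apply: rank2 => a b e.
  have e2 := congr1 (fun z => z *m rho a0) e.
  rewrite /= mulmxDl -!scalemxAl eig // ew // !scalerA mul0mx in e2.
  have e3 : (b * (lam a0 - lam a0^-1%g)) *: w1 = 0.
    have -> : (b * (lam a0 - lam a0^-1%g)) *: w1 =
       lam a0 *: (a *: u + b *: w1) - ((a * lam a0) *: u + (b * lam a0^-1%g) *: w1).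
      rewrite [a * lam a0]mulrC scalerDr !scalerA opprD addrACA subrr add0r -scalerBl.
      by congr (_ *: _); ring.
    by rewrite e e2 scaler0 subrr.
  move/eqP: e3; rewrite scalemx_eq0 (negbTE w10) orbF mulf_eq0 subr_eq0 (negbTE lnm) orbF.
  move=> /eqP b0; split=> //; move: e; rewrite b0 scale0r addr0 => /eqP.
  by rewrite scalemx_eq0 (negbTE u0) orbF => /eqP.
move=> a aA; exists (lam a); split; first exact: lam0.
by rewrite eig // ew // linv'.
Qed.

End Part1.

Theorem lemmaD1 (F : closedFieldType) (m : nat) (M : 'M[F]_(2 * m))
    (gT : finGroupType) (A : {group gT})
    (rho : mx_representation F A (2 * m)) :
  nondeg_qf M -> split_qf M ->
  mx_faithful rho ->
  (forall a, a \in A -> in_O M (rho a)) ->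
  abelian A -> odd #|A| ->
  (forall p : nat, p \in [pchar F] -> ~~ (p %| #|A|)%N) ->
  (forall lam : gT -> F, linear_char A lam ->
     (exists2 a, a \in A & lam a != 1) ->
     (2 <= multiplicity rho A lam)%N ->
     centralizer_has_root_group M rho A) /\
  ((4 <= multiplicity rho A (fun _ : gT => 1%R : F))%N ->
     centralizer_has_root_group M rho A).
Proof.
move=> nd _ _ hO _ oddA chA.
have rM : {in A &, forall a b, rho (a * b)%g = rho a *m rho b}.
  by move=> a b aA bA; exact: repr_mxM.
have cA : #|A|%:R != 0 :> F.
  rewrite GRing.natf_neq0_pchar; apply/pnatP => [|q pq qd]; first exact: cardG_gt0.
  by apply/negP => h; have := chA q h; rewrite qd.
have eigW : forall (lam : gT -> F) (v : 'rV[F]_(2 * m)),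
    (v <= \bigcap_(a in A) kermx (rho a - (lam a)%:M))%MS ->
    forall a, a \in A -> v *m rho a = lam a *: v.
  move=> lam v /sub_bigcapmxP h a aA; have := h a aA.
  by rewrite sub_kermx mulmxBr mul_mx_scalar subr_eq0 => /eqP.
split.
- move=> lam [ln0 lM] [a0 a0A la0] r2; rewrite /multiplicity in r2.
  have l1 : lam 1%g = 1.
    have e := lM 1%g 1%g (group1 A) (group1 A); rewrite mulg1 in e.
    by apply: (mulIf (ln0 1%g (group1 A))); rewrite mul1r -e.
  have linv : forall a, a \in A -> lam a * lam a^-1%g = 1.
    by move=> a aA; rewrite -lM ?groupV // mulgV l1.
  have l2 : lam a0 ^+ 2 != 1.
    have lx : forall k, lam (a0 ^+ k)%g = lam a0 ^+ k.
      elim=> [|k IH]; first by rewrite expg0 expr0 l1.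
      by rewrite expgS lM ?groupX // IH exprS.
    have := lx #|A|; rewrite expg_cardG // l1 => e.
    apply: contra la0 => /eqP h2.
    rewrite -(odd_double_half #|A|) oddA -mul2n exprD exprM h2 expr1n mulr1 expr1 in e.
    by rewrite -e.
  exact: (@part1 F _ M gT A rho hO _ _ lam a0 nd cA rM lM linv a0A l2 r2 (eigW lam)).
- move=> r4; rewrite /multiplicity in r4.
  apply: (@part2 F _ M gT A rho hO _ _ r4) => v hv a aA.
  by rewrite (eigW _ v hv a aA) scale1r.
Qed.
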